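(* Let $\Gamma$ be a group and $N$ a central subgroup. Then: (i) if there exists $g_0\in \Gamma$ such that $g_0^k\notin N$ for all nonzero $k\in \mathbb Z$, then the HNN-extension $\langle \Gamma, t\;|\; t^{-1}Nt = N, \; \mathrm{id}\rangle$ embeds into the amalgamated free product $\Gamma \ast_{N=N} \Gamma$; (ii) if for every $K\in \mathbb N$ there exists $g_0\in \Gamma$ such that $g_0^k\notin N$ for all $k$ with $1\le |k|\le K$, and the HNN-extension $\langle \Gamma, t\;|\; t^{-1}Nt = N, \; \mathrm{id}\rangle$ is not residually finite, then $\Gamma \ast_{N=N} \Gamma$ is not residually finite.
   Context: $\langle \Gamma, t\;|\; t^{-1}Nt = N, \mathrm{id}\rangle$ is the HNN-extension with stable letter $t$ commuting with every element of $N$; $\Gamma\ast_{N=N}\Gamma$ is the free product of two copies of $\Gamma$ amalgamated along the identity on $N$. A group is residually finite if homomorphisms to finite groups separate its points. *)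

(* Defs.v *)
From Stdlib Require Import ZArith List.
Set Implicit Arguments.

Record grp := Grp {
  car :> Type;
  gmul : car -> car -> car;
  gone : car;
  ginv : car -> car;
  gmulA : forall x y z, gmul x (gmul y z) = gmul (gmul x y) z;
  gmul1 : forall x, gmul gone x = x;
  gmulV : forall x, gmul (ginv x) x = gone
}.

Arguments gmul {g}. Arguments gone {g}. Arguments ginv {g}.

Record hom (G H : grp) := Hom {
  hfun :> G -> H;
  hfunM : forall x y, hfun (gmul x y) = gmul (hfun x) (hfun y)
}.

Fixpoint npow {G : grp} (g : G) (n : nat) : G :=
  match n with O => gone | S m => gmul g (npow g m) end.

Definition zpow {G : grp} (g : G) (k : Z) : G :=
  match k with
  | Z0 => gone
  | Zpos p => npow g (Pos.to_nat p)
  | Zneg p => ginv (npow g (Pos.to_nat p))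
  end.

Definition is_subgroup {G : grp} (N : G -> Prop) : Prop :=
  N gone /\ (forall x y, N x -> N y -> N (gmul x y)) /\ (forall x, N x -> N (ginv x)).

Definition is_central {G : grp} (N : G -> Prop) : Prop :=
  forall n g, N n -> gmul n g = gmul g n.

(* H, with iota : Gamma -> H and stable letter t, is the HNN-extension
   < Gamma, t | t^-1 N t = N, id >  (universal property). *)
Definition is_HNN_id (Gam : grp) (N : Gam -> Prop)
    (H : grp) (iota : hom Gam H) (t : H) : Prop :=
  (forall n, N n -> gmul (ginv t) (gmul (iota n) t) = iota n) /\
  (forall (G : grp) (f : hom Gam G) (s : G),
     (forall n, N n -> gmul (ginv s) (gmul (f n) s) = f n) ->
     (exists h : hom H G, (forall g, h (iota g) = f g) /\ h t = s) /\
     (forall h1 h2 : hom H G,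
        (forall g, h1 (iota g) = f g) -> h1 t = s ->
        (forall g, h2 (iota g) = f g) -> h2 t = s ->
        forall x, h1 x = h2 x)).

(* A, with j1 j2 : Gamma -> A, is the amalgamated free product
   Gamma *_{N=N} Gamma along the identity of N (universal property). *)
Definition is_amalgam_id (Gam : grp) (N : Gam -> Prop)
    (A : grp) (j1 j2 : hom Gam A) : Prop :=
  (forall n, N n -> j1 n = j2 n) /\
  (forall (G : grp) (f1 f2 : hom Gam G),
     (forall n, N n -> f1 n = f2 n) ->
     (exists h : hom A G, (forall g, h (j1 g) = f1 g) /\ (forall g, h (j2 g) = f2 g)) /\
     (forall h1 h2 : hom A G,
        (forall g, h1 (j1 g) = f1 g) -> (forall g, h1 (j2 g) = f2 g) ->
        (forall g, h2 (j1 g) = f1 g) -> (forall g, h2 (j2 g) = f2 g) ->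
        forall x, h1 x = h2 x)).

Definition embeds (G H : grp) : Prop :=
  exists f : hom G H, forall x y, f x = f y -> x = y.

Definition finite_grp (F : grp) : Prop := exists l : list F, forall x, In x l.

Definition residually_finite (G : grp) : Prop :=
  forall g : G, g <> gone ->
    exists (F : grp) (phi : hom G F), finite_grp F /\ phi g <> gone.

(* Main.v *)
Require Import Defs.
From Stdlib Require Import ZArith List Lia.
From Stdlib Require Import ClassicalEpsilon FunctionalExtensionality PropExtensionality ProofIrrelevance.
Import ListNotations.

Local Infix "⋅" := gmul (at level 40, left associativity).
Arguments gmul1 {g} x. Arguments gmulA {g} x y z. Arguments gmulV {g} x.

Lemma mulVr {G : grp} (x : G) : x ⋅ ginv x = gone.
Proof.
  rewrite <- (gmul1 (x ⋅ ginv x)).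
  rewrite <- (gmulV (ginv x)) at 1.
  rewrite <- gmulA. rewrite (gmulA (ginv x) x (ginv x)). rewrite gmulV, gmul1.
  apply gmulV.
Qed.

Lemma mulr1 {G : grp} (x : G) : x ⋅ gone = x.
Proof. rewrite <- (gmulV x), gmulA, mulVr, gmul1. reflexivity. Qed.

Lemma mulKl {G : grp} (a x : G) : ginv a ⋅ (a ⋅ x) = x.
Proof. rewrite gmulA, gmulV, gmul1. reflexivity. Qed.

Lemma mulKr {G : grp} (a x : G) : a ⋅ (ginv a ⋅ x) = x.
Proof. rewrite gmulA, mulVr, gmul1. reflexivity. Qed.

Lemma cancel_l {G : grp} (a x y : G) : a ⋅ x = a ⋅ y -> x = y.
Proof. intros E. rewrite <- (mulKl a x), <- (mulKl a y), E. reflexivity. Qed.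

Lemma inv_uniq {G : grp} (x y : G) : x ⋅ y = gone -> y = ginv x.
Proof. intros E. apply (cancel_l x). rewrite E, mulVr. reflexivity. Qed.

Lemma inv_inv {G : grp} (x : G) : ginv (ginv x) = x.
Proof. symmetry. apply inv_uniq. apply gmulV. Qed.

Lemma inv_mul {G : grp} (x y : G) : ginv (x ⋅ y) = ginv y ⋅ ginv x.
Proof. symmetry. apply inv_uniq.
  rewrite <- gmulA, (gmulA y), mulVr, gmul1, mulVr. reflexivity. Qed.

Lemma inv_one {G : grp} : ginv (@gone G) = gone.
Proof. symmetry. apply inv_uniq. apply gmul1. Qed.

Lemma hom_one {G K : grp} (h : hom G K) : h gone = gone.
Proof. apply (cancel_l (h gone)). rewrite <- hfunM, gmul1, mulr1. reflexivity. Qed.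

Lemma hom_inv {G K : grp} (h : hom G K) (x : G) : h (ginv x) = ginv (h x).
Proof. apply inv_uniq. rewrite <- hfunM, mulVr. apply hom_one. Qed.

Lemma npow_comm {G : grp} (g : G) n : npow g n ⋅ g = g ⋅ npow g n.
Proof. induction n; simpl. rewrite gmul1, mulr1; reflexivity.
  rewrite <- gmulA, IHn. reflexivity. Qed.

Lemma comm_inv {G : grp} (x y : G) : x ⋅ y = y ⋅ x -> x ⋅ ginv y = ginv y ⋅ x.
Proof. intros E. apply (cancel_l y). rewrite mulKr, gmulA, <- E, <- gmulA, mulVr, mulr1. reflexivity. Qed.

Lemma zpow_succ {G : grp} (g : G) e : zpow g (Z.succ e) = g ⋅ zpow g e.
Proof.
  destruct e as [|p|p].
  - simpl. reflexivity.
  - replace (Z.succ (Zpos p)) with (Zpos (Pos.succ p)) by lia.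
    unfold zpow. rewrite Pos2Nat.inj_succ. reflexivity.
  - destruct (Pos.succ_pred_or p) as [->|E].
    + simpl. rewrite mulr1, mulVr. reflexivity.
    + rewrite <- E. replace (Z.succ (Zneg (Pos.succ (Pos.pred p)))) with (Zneg (Pos.pred p)) by lia.
      unfold zpow. rewrite Pos2Nat.inj_succ. simpl.
      rewrite inv_mul. set (X := npow g (Pos.to_nat (Pos.pred p))).
      assert (C : ginv X ⋅ g = g ⋅ ginv X).
      { symmetry. apply comm_inv. unfold X. symmetry. apply npow_comm. }
      rewrite gmulA, <- C, <- gmulA, mulVr, mulr1. reflexivity.
Qed.

Lemma zpow_pred {G : grp} (g : G) e : zpow g (Z.pred e) = ginv g ⋅ zpow g e.
Proof. rewrite <- (Z.succ_pred e) at 2. rewrite zpow_succ, mulKl. reflexivity. Qed.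

Lemma zpow_add {G : grp} (g : G) a b : zpow g (a + b) = zpow g a ⋅ zpow g b.
Proof.
  induction a using Z.peano_ind.
  - simpl. rewrite gmul1. reflexivity.
  - replace (Z.succ a + b)%Z with (Z.succ (a + b)) by lia.
    rewrite !zpow_succ, IHa, gmulA. reflexivity.
  - replace (Z.pred a + b)%Z with (Z.pred (a + b)) by lia.
    rewrite !zpow_pred, IHa, gmulA. reflexivity.
Qed.

Lemma hom_npow {G K : grp} (h : hom G K) g n : h (npow g n) = npow (h g) n.
Proof. induction n; simpl. apply hom_one. rewrite hfunM, IHn. reflexivity. Qed.

Lemma hom_zpow {G K : grp} (h : hom G K) g e : h (zpow g e) = zpow (h g) e.
Proof. destruct e; simpl. apply hom_one. apply hom_npow. rewrite hom_inv, hom_npow. reflexivity. Qed.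

Lemma comm_npow {G : grp} (x y : G) n : x ⋅ y = y ⋅ x -> x ⋅ npow y n = npow y n ⋅ x.
Proof. intros E. induction n; simpl. rewrite gmul1, mulr1; reflexivity.
  rewrite gmulA, E, <- gmulA, IHn, gmulA. reflexivity. Qed.

Lemma comm_zpow {G : grp} (x y : G) e : x ⋅ y = y ⋅ x -> x ⋅ zpow y e = zpow y e ⋅ x.
Proof. intros E. destruct e; simpl. rewrite gmul1, mulr1; reflexivity.
  apply comm_npow; auto. apply comm_inv, comm_npow; auto. Qed.

Lemma zpow_opp {G : grp} (g : G) e : zpow g (- e) = ginv (zpow g e).
Proof. apply inv_uniq. rewrite <- zpow_add. replace (e + - e)%Z with 0%Z by lia. reflexivity. Qed.

Definition hcomp {G K L : grp} (f : hom G K) (g : hom K L) : hom G L.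
Proof. refine (@Hom G L (fun x => g (f x)) _). intros x y. rewrite !hfunM. reflexivity. Defined.
Definition hid (G : grp) : hom G G := @Hom G G (fun x => x) (fun x y => eq_refl).
Record perm (X : Type) := Perm { pf : X -> X; pg : X -> X;
  pfg : forall x, pf (pg x) = x; pgf : forall x, pg (pf x) = x }.
Arguments pf {X}. Arguments pg {X}. Arguments Perm {X}. Arguments pfg {X}. Arguments pgf {X}.

Lemma perm_ext {X} (p q : perm X) :
  (forall x, pf p x = pf q x) -> (forall x, pg p x = pg q x) -> p = q.
Proof.
  destruct p as [f g fg gf], q as [f' g' fg' gf']; simpl; intros E1 E2.
  assert (f = f') by (extensionality x; auto). subst f'.
  assert (g = g') by (extensionality x; auto). subst g'.
  f_equal; apply proof_irrelevance.
Qed.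

Definition pmul {X} (p q : perm X) : perm X.
Proof. refine (Perm (fun x => pf p (pf q x)) (fun x => pg q (pg p x)) _ _);
  intros x; [rewrite pfg, pfg | rewrite pgf, pgf]; reflexivity. Defined.
Definition pone X : perm X := Perm (fun x : X => x) (fun x => x) (fun x => eq_refl) (fun x => eq_refl).
Definition pinv {X} (p : perm X) : perm X := Perm (pg p) (pf p) (pgf p) (pfg p).

Definition PermG (X : Type) : grp.
Proof. refine (@Grp (perm X) pmul (pone X) pinv _ _ _).
  - intros; apply perm_ext; reflexivity.
  - intros; apply perm_ext; reflexivity.
  - intros; apply perm_ext; simpl; intros; [apply pgf | apply pgf].
Defined.

Definition subG (G : grp) (P : G -> Prop) (P1 : P gone)
  (PM : forall x y, P x -> P y -> P (x ⋅ y)) (PV : forall x, P x -> P (ginv x)) : grp.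
Proof.
  refine (@Grp {x : G | P x}
    (fun a b => exist _ (proj1_sig a ⋅ proj1_sig b) (PM _ _ (proj2_sig a) (proj2_sig b)))
    (exist _ gone P1) (fun a => exist _ (ginv (proj1_sig a)) (PV _ (proj2_sig a))) _ _ _);
  intros; apply eq_sig_hprop; try (intros; apply proof_irrelevance); simpl.
  apply gmulA. apply gmul1. apply gmulV.
Defined.

Definition rep {Gam : grp} (N : Gam -> Prop) (x : Gam) : Gam :=
  epsilon (inhabits (@gone Gam)) (fun r => N (ginv x ⋅ r)).
Definition equiv {Gam : grp} (N : Gam -> Prop) (x y : Gam) := N (ginv x ⋅ y).

Lemma Nmul_r {Gam : grp} {N : Gam -> Prop} (HN : is_subgroup N) a m :
  N m -> (N (a ⋅ m) <-> N a).
Proof. destruct HN as (N1 & NM & NV). intros Hm; split; intros H.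
  - replace a with ((a ⋅ m) ⋅ ginv m) by (rewrite <- gmulA, mulVr, mulr1; auto). auto.
  - auto. Qed.

Lemma equiv_N {Gam : grp} {N : Gam -> Prop} (HN : is_subgroup N) x y :
  equiv N x y -> (N x <-> N y).
Proof. intros E. unfold equiv in E. rewrite <- (mulKr x y). rewrite Nmul_r; auto. tauto. Qed.

Lemma equiv_sym {Gam : grp} {N : Gam -> Prop} (HN : is_subgroup N) x y :
  equiv N x y -> equiv N y x.
Proof. destruct HN as (N1 & NM & NV). unfold equiv. intros E.
  replace (ginv y ⋅ x) with (ginv (ginv x ⋅ y)) by (rewrite inv_mul, inv_inv; auto). auto. Qed.

Lemma equiv_trans {Gam : grp} {N : Gam -> Prop} (HN : is_subgroup N) x y z :
  equiv N x y -> equiv N y z -> equiv N x z.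
Proof. destruct HN as (N1 & NM & NV). unfold equiv. intros E1 E2.
  replace (ginv x ⋅ z) with ((ginv x ⋅ y) ⋅ (ginv y ⋅ z)) by (rewrite <- gmulA, mulKr; auto). auto. Qed.

Lemma equiv_mul_l {Gam : grp} {N : Gam -> Prop} a x y :
  equiv N x y -> equiv N (a ⋅ x) (a ⋅ y).
Proof. unfold equiv. rewrite inv_mul, <- gmulA, mulKl. auto. Qed.

Lemma equiv_mulN {Gam : grp} {N : Gam -> Prop} x m : N m -> equiv N x (x ⋅ m).
Proof. unfold equiv. rewrite mulKl. auto. Qed.

Lemma equiv_rep {Gam : grp} {N : Gam -> Prop} (HN : is_subgroup N) x : equiv N x (rep N x).
Proof. unfold rep, equiv. apply epsilon_spec. exists x. rewrite gmulV. apply HN. Qed.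

Lemma rep_eq {Gam : grp} {N : Gam -> Prop} (HN : is_subgroup N) x y :
  equiv N x y -> rep N x = rep N y.
Proof. intros E. unfold rep. f_equal. extensionality r. apply propositional_extensionality.
  split; intros H.
  - apply (equiv_trans HN _ _ _ (equiv_sym HN _ _ E) H).
  - apply (equiv_trans HN _ _ _ E H). Qed.

Lemma rep_rep {Gam : grp} {N : Gam -> Prop} (HN : is_subgroup N) x : rep N (rep N x) = rep N x.
Proof. symmetry. apply rep_eq; auto. apply equiv_rep; auto. Qed.

Definition gen {Gam : grp} (N : Gam -> Prop) (b : bool) (z : Gam) (L : list (bool * Gam)) :=
  if excluded_middle_informative (N z) then L else (b, rep N z) :: L.

Definition actl {Gam : grp} (N : Gam -> Prop) (b : bool) (g : Gam) (L : list (bool * Gam)) :=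
  match L with
  | (b', q) :: R => if Bool.bool_dec b b' then gen N b (g ⋅ q) R else gen N b g L
  | [] => gen N b g []
  end.

Definition notstart {Gam : grp} (b : bool) (L : list (bool * Gam)) : Prop :=
  match L with (b', _) :: _ => b' <> b | [] => True end.

Fixpoint valid {Gam : grp} (N : Gam -> Prop) (L : list (bool * Gam)) : Prop :=
  match L with
  | [] => True
  | (b, q) :: R => rep N q = q /\ ~ N q /\ notstart b R /\ valid N R
  end.

Lemma actl_new {Gam : grp} {N : Gam -> Prop} b g L : notstart b L -> actl N b g L = gen N b g L.
Proof. destruct L as [|[b' q] R]; simpl; auto. intros H.
  destruct (Bool.bool_dec b b'); congruence. Qed.

Lemma actl_same {Gam : grp} {N : Gam -> Prop} b g q R : actl N b g ((b, q) :: R) = gen N b (g ⋅ q) R.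
Proof. simpl. destruct (Bool.bool_dec b b); congruence. Qed.

Lemma gen_eq {Gam : grp} {N : Gam -> Prop} (HN : is_subgroup N) b z z' L :
  equiv N z z' -> gen N b z L = gen N b z' L.
Proof. intros E. unfold gen. rewrite (rep_eq HN _ _ E).
  destruct (excluded_middle_informative (N z)), (excluded_middle_informative (N z'));
  auto; exfalso; apply (equiv_N HN _ _) in E; tauto. Qed.

Lemma gen_N {Gam : grp} {N : Gam -> Prop} b z L : N z -> gen N b z L = L.
Proof. unfold gen. destruct (excluded_middle_informative (N z)); tauto. Qed.

Lemma gen_nN {Gam : grp} {N : Gam -> Prop} b z L : ~ N z -> gen N b z L = (b, rep N z) :: L.
Proof. unfold gen. destruct (excluded_middle_informative (N z)); tauto. Qed.

Lemma gen_valid {Gam : grp} {N : Gam -> Prop} (HN : is_subgroup N) b z L :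
  notstart b L -> valid N L -> valid N (gen N b z L).
Proof. unfold gen. destruct (excluded_middle_informative (N z)); auto.
  intros; simpl. split; [apply rep_rep; auto|]. split; auto.
  rewrite <- (equiv_N HN _ _ (equiv_rep HN z)). auto. Qed.

Lemma start_cases {Gam : grp} b (L : list (bool * Gam)) :
  (exists q R, L = (b, q) :: R) \/ notstart b L.
Proof. destruct L as [|[b' q] R]; simpl; auto. destruct (Bool.bool_dec b' b); subst; eauto. Qed.

Lemma actl_valid {Gam : grp} {N : Gam -> Prop} (HN : is_subgroup N) b g L :
  valid N L -> valid N (actl N b g L).
Proof. intros V. destruct (start_cases b L) as [(q & R & ->)|NS].
  - rewrite actl_same. simpl in V. apply gen_valid; tauto.
  - rewrite actl_new; auto. apply gen_valid; auto. Qed.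

Lemma actl_comp {Gam : grp} {N : Gam -> Prop} (HN : is_subgroup N) b g h L :
  valid N L -> actl N b g (actl N b h L) = actl N b (g ⋅ h) L.
Proof. intros V. destruct (start_cases b L) as [(q & R & ->)|NS].
  - simpl in V. destruct V as (Rq & Nq & NS & VR).
    rewrite !actl_same. destruct (excluded_middle_informative (N (h ⋅ q))) as [Hn|Hn].
    + rewrite gen_N by auto. rewrite actl_new by auto. apply gen_eq; auto.
      rewrite <- gmulA. apply equiv_mulN; auto.
    + rewrite gen_nN by auto. rewrite actl_same. apply gen_eq; auto.
      rewrite <- gmulA. apply equiv_mul_l, equiv_sym, equiv_rep; auto.
  - rewrite !(actl_new _ _ _ NS). destruct (excluded_middle_informative (N h)) as [Hn|Hn].
    + rewrite gen_N by auto. rewrite actl_new by auto. apply gen_eq; auto. apply equiv_mulN; auto.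
    + rewrite gen_nN by auto. rewrite actl_same. apply gen_eq; auto.
      apply equiv_mul_l, equiv_sym, equiv_rep; auto.
Qed.

Lemma actl_N {Gam : grp} {N : Gam -> Prop} (HN : is_subgroup N) (HC : is_central N) b n L :
  N n -> valid N L -> actl N b n L = L.
Proof. intros Hn V. destruct (start_cases b L) as [(q & R & ->)|NS].
  - simpl in V. destruct V as (Rq & Nq & NS & VR). rewrite actl_same.
    rewrite gen_nN.
    + f_equal. f_equal. rewrite <- Rq at 2. symmetry. apply rep_eq; auto.
      rewrite (HC n q Hn). apply equiv_mulN; auto.
    + intros H. apply Nq. rewrite (HC n q Hn) in H. rewrite Nmul_r in H; auto.
  - rewrite actl_new by auto. apply gen_N; auto.
Qed.

Definition Om {Gam : grp} (N : Gam -> Prop) := {L : list (bool * Gam) | valid N L}.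

Definition actO {Gam : grp} {N : Gam -> Prop} (HN : is_subgroup N) b g (w : Om N) : Om N :=
  exist _ (actl N b g (proj1_sig w)) (actl_valid HN b g _ (proj2_sig w)).

Lemma actO_comp {Gam : grp} {N : Gam -> Prop} (HN : is_subgroup N) b g h w :
  actO HN b g (actO HN b h w) = actO HN b (g ⋅ h) w.
Proof. apply eq_sig_hprop; [intros; apply proof_irrelevance|]. simpl.
  apply actl_comp; auto. apply proj2_sig. Qed.

Lemma actO_N {Gam : grp} {N : Gam -> Prop} (HN : is_subgroup N) (HC : is_central N) b n w :
  N n -> actO HN b n w = w.
Proof. intros Hn. apply eq_sig_hprop; [intros; apply proof_irrelevance|]. simpl.
  apply actl_N; auto. apply proj2_sig. Qed.

Definition actP {Gam : grp} {N : Gam -> Prop} (HN : is_subgroup N) (HC : is_central N) (b : bool) (g : Gam)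
  : perm (Om N).
Proof. refine (Perm (actO HN b g) (actO HN b (ginv g)) _ _); intros w;
  rewrite actO_comp; apply actO_N; auto; [rewrite mulVr | rewrite gmulV]; apply HN. Defined.

Definition actH {Gam : grp} {N : Gam -> Prop} (HN : is_subgroup N) (HC : is_central N) (b : bool)
  : hom Gam (PermG (Om N)).
Proof. refine (@Hom Gam (PermG (Om N)) (actP HN HC b) _). intros g h.
  apply perm_ext; simpl; intros w; rewrite actO_comp; [reflexivity|].
  rewrite inv_mul. reflexivity. Defined.

Lemma actH_N {Gam : grp} {N : Gam -> Prop} (HN : is_subgroup N) (HC : is_central N) n :
  N n -> actH HN HC true n = actH HN HC false n.
Proof. intros Hn. apply perm_ext; simpl; intros w; rewrite !actO_N; auto; apply HN; auto. Qed.

Fixpoint W {Gam H : grp} (iota : hom Gam H) (t : H) (l : list (Z * Gam)) : H :=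
  match l with [] => gone | (e, g) :: l' => zpow t e ⋅ (iota g ⋅ W iota t l') end.

Lemma W_app {Gam H : grp} (iota : hom Gam H) (t : H) l1 l2 :
  W iota t (l1 ++ l2) = W iota t l1 ⋅ W iota t l2.
Proof. induction l1 as [|[e g] l1 IH]; simpl. rewrite gmul1; auto.
  rewrite IH, !gmulA. reflexivity. Qed.

Lemma W_inv {Gam H : grp} (iota : hom Gam H) (t : H) l : exists l', W iota t l' = ginv (W iota t l).
Proof. induction l as [|[e g] l IH]; simpl.
  - exists []. simpl. rewrite inv_one. auto.
  - destruct IH as [l' E]. exists (l' ++ [(0%Z, ginv g)] ++ [((- e)%Z, gone)]).
    rewrite !W_app, E. simpl. rewrite !mulr1, hom_one, zpow_opp, hom_inv, !mulr1, gmul1.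
    rewrite !inv_mul, gmulA. reflexivity. Qed.

Lemma W_gen {Gam : grp} (N : Gam -> Prop) (H : grp) (iota : hom Gam H) (t : H)
  (HH : is_HNN_id N iota t) : forall x, exists l, x = W iota t l.
Proof.
  set (P := fun x : H => exists l, x = W iota t l).
  assert (P1 : P gone) by (exists []; reflexivity).
  assert (PM : forall x y, P x -> P y -> P (x ⋅ y)).
  { intros x y [l1 ->] [l2 ->]. exists (l1 ++ l2). rewrite W_app. auto. }
  assert (PV : forall x, P x -> P (ginv x)).
  { intros x [l ->]. destruct (W_inv iota t l) as [l' E]. exists l'. auto. }
  set (S := subG H P P1 PM PV).
  assert (Pi : forall g, P (iota g)).
  { intros g. exists [(0%Z, g)]. simpl. rewrite gmul1, mulr1. auto. }
  assert (Pt : P t).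
  { exists [(1%Z, gone)]. simpl. rewrite hom_one, !mulr1. auto. }
  assert (fM : forall x y, (exist P (iota (x ⋅ y)) (Pi _) : S) = gmul (g:=S) (exist P (iota x) (Pi x)) (exist P (iota y) (Pi y))).
  { intros x y. apply eq_sig_hprop; [intros; apply proof_irrelevance|]. simpl. apply hfunM. }
  set (f := @Hom Gam S (fun g => exist P (iota g) (Pi g)) fM).
  set (s := (exist P t Pt : S)).
  destruct HH as [Ht HU].
  destruct (HU S f s) as [[h [hf hs]] _].
  { intros n Hn. apply eq_sig_hprop; [intros; apply proof_irrelevance|]. simpl. auto. }
  set (incl := @Hom S H (fun a => proj1_sig a) (fun a b => eq_refl)).
  destruct (HU H iota t Ht) as [_ U].
  intros x. specialize (U (hcomp h incl) (hid H)).
  assert (E : hcomp h incl x = hid H x).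
  { apply U; simpl; auto. intros g. rewrite hf. reflexivity. rewrite hs. reflexivity. }
  simpl in E. rewrite <- E. apply (proj2_sig (h x)).
Qed.

Fixpoint Sz {Gam : grp} (l : list (Z * Gam)) : Z :=
  match l with [] => 0%Z | (e, _) :: l' => (Z.abs e + Sz l')%Z end.

Fixpoint reduced {Gam : grp} (N : Gam -> Prop) (l : list (Z * Gam)) : Prop :=
  match l with
  | (e, g) :: (((e', g') :: _) as r) => ~ N g /\ e' <> 0%Z /\ reduced N r
  | _ => True
  end.

Lemma Sz_nonneg {Gam : grp} (l : list (Z * Gam)) : (0 <= Sz l)%Z.
Proof. induction l as [|[e g] l IH]; simpl; lia. Qed.

Lemma red {Gam : grp} (N : Gam -> Prop) (H : grp) (iota : hom Gam H) (t : H)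
  (Ht : forall n, N n -> ginv t ⋅ (iota n ⋅ t) = iota n) :
  forall n l, length l <= n -> exists l', W iota t l' = W iota t l /\ (Sz l' <= Sz l)%Z /\
     length l' <= length l /\ reduced N l'.
Proof.
  assert (Comm : forall m e, N m -> iota m ⋅ zpow t e = zpow t e ⋅ iota m).
  { intros m e Hm. apply comm_zpow. rewrite <- (Ht m Hm) at 2. rewrite mulKr. auto. }
  induction n as [|n IH]; intros l Hl.
  - destruct l; simpl in Hl; [|lia]. exists []. simpl. repeat split; auto; lia.
  - destruct l as [|[e g] tl].
    + exists []. simpl. repeat split; auto; lia.
    + simpl in Hl. destruct (IH tl ltac:(lia)) as (l1 & W1 & S1 & L1 & R1).
      assert (EW : W iota t ((e, g) :: l1) = W iota t ((e, g) :: tl)) by (simpl; rewrite W1; auto).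
      destruct l1 as [|[e2 g2] r2].
      * exists [(e, g)]. rewrite EW. simpl in *. repeat split; auto; lia.
      * destruct (classic (N g)) as [Ng|Ng].
        { destruct (IH (((e + e2)%Z, g ⋅ g2) :: r2) ltac:(simpl in *; lia)) as (l' & W' & S' & L' & R').
          exists l'. repeat split; auto.
          - rewrite W', <- EW. simpl. rewrite zpow_add, hfunM, !gmulA.
            rewrite <- (gmulA (zpow t e) (iota g) (zpow t e2)), Comm by auto. rewrite !gmulA. auto.
          - simpl in *. lia.
          - simpl in *. lia. }
        destruct (Z.eq_dec e2 0) as [E2|E2].
        { subst e2. destruct (IH ((e, g ⋅ g2) :: r2) ltac:(simpl in *; lia)) as (l' & W' & S' & L' & R').
          exists l'. repeat split; auto.
          - rewrite W', <- EW. simpl. rewrite gmul1, hfunM, !gmulA. auto.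
          - simpl in *. lia.
          - simpl in *. lia. }
        exists ((e, g) :: (e2, g2) :: r2). split; [exact EW|].
        simpl in *. repeat split; auto; lia.
Qed.

Lemma key {Gam : grp} {N : Gam -> Prop} (HN : is_subgroup N) (HC : is_central N)
  (H : grp) (iota : hom Gam H) (t : H)
  (A : grp) (j1 j2 : hom Gam A) (HA : is_amalgam_id N j1 j2)
  (c : Gam) (phi : hom H A) (phi_i : forall g, phi (iota g) = j1 g) (phi_t : phi t = j2 c)
  (K : Z) (Hc : forall k, (1 <= Z.abs k <= K)%Z -> ~ N (zpow c k)) :
  forall l, reduced N l -> (Sz l <= K)%Z -> phi (W iota t l) = gone -> W iota t l = gone.
Proof.
  destruct HA as [HA0 HAU].
  destruct (HAU (PermG (Om N)) (actH HN HC true) (actH HN HC false) (actH_N HN HC))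
    as [[hA [hA1 hA2]] _].
  destruct (HAU Gam (hid Gam) (hid Gam) (fun n _ => eq_refl)) as [[fold [fold1 _]] _].
  set (E := fun l => proj1_sig (pf (hA (phi (W iota t l))) (exist (valid N) [] I))).
  assert (Econs : forall e g l, E ((e, g) :: l) = actl N false (zpow c e) (actl N true g (E l))).
  { intros e g l. unfold E. simpl W. rewrite !(hfunM phi), phi_i, hom_zpow, phi_t, <- hom_zpow, !(hfunM hA), hA1, hA2.
    reflexivity. }
  assert (Ezero : forall l, phi (W iota t l) = gone -> E l = []).
  { intros l Hl. unfold E. rewrite Hl, hom_one. reflexivity. }
  assert (Inv : forall l e g, reduced N ((e, g) :: l) -> e <> 0%Z -> (Sz ((e, g) :: l) <= K)%Z ->
            exists q R, E ((e, g) :: l) = (false, q) :: R).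
  { induction l as [|[e' g'] l IH]; intros e g Rd He Hs.
    - rewrite Econs, (Ezero []) by (apply hom_one). simpl in Hs. pose proof (Sz_nonneg (@nil (Z * Gam))).
      assert (Nc : ~ N (zpow c e)) by (apply Hc; lia).
      rewrite actl_new.
      + rewrite gen_nN by auto. do 2 eexists; reflexivity.
      + unfold actl, gen. destruct (excluded_middle_informative (N (gone ⋅ g))), (excluded_middle_informative (N g)); simpl; auto; discriminate.
    - destruct Rd as (Ng & He' & Rd).
      simpl in Hs. pose proof (Sz_nonneg l).
      destruct (IH e' g' Rd He' ltac:(simpl; lia)) as (q & R & EQ).
      rewrite Econs, EQ. rewrite (actl_new true) by (simpl; discriminate).
      rewrite gen_nN by auto. rewrite (actl_new false) by (simpl; discriminate).
      rewrite gen_nN by (apply Hc; lia). do 2 eexists; reflexivity. }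
  intros l Rd Hs Hphi. destruct l as [|[e g] l]; [reflexivity|].
  destruct (Z.eq_dec e 0) as [He|He].
  2:{ destruct (Inv l e g Rd He Hs) as (q & R & EQ). rewrite Ezero in EQ by auto. discriminate. }
  subst e. destruct l as [|[e' g'] l].
  - simpl in Hphi |- *. rewrite mulr1, gmul1 in *. rewrite phi_i in Hphi.
    assert (g = gone). { transitivity (hid Gam g); [reflexivity|]. rewrite <- (fold1 g). rewrite Hphi. apply hom_one. }
    subst g. apply hom_one.
  - exfalso. destruct Rd as (Ng & He' & Rd).
    simpl in Hs. pose proof (Sz_nonneg l).
    destruct (Inv l e' g' Rd He' ltac:(simpl; lia)) as (q & R & EQ).
    pose proof (Ezero _ Hphi) as E0. rewrite Econs, EQ in E0.
    rewrite (actl_new true) in E0 by (simpl; discriminate).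
    rewrite gen_nN in E0 by auto. rewrite (actl_new false) in E0 by (simpl; discriminate).
    rewrite gen_N in E0 by apply HN. discriminate.
Qed.

Theorem lemma8p2 (Gam : grp) (N : Gam -> Prop)
  (HN : is_subgroup N) (HC : is_central N)
  (H : grp) (iota : hom Gam H) (t : H) (HH : is_HNN_id N iota t)
  (A : grp) (j1 j2 : hom Gam A) (HA : is_amalgam_id N j1 j2) :
  ((exists g0 : Gam, forall k : Z, k <> 0%Z -> ~ N (zpow g0 k)) -> embeds H A) /\
  ((forall K : nat, exists g0 : Gam, forall k : Z,
       (1 <= Z.abs k <= Z.of_nat K)%Z -> ~ N (zpow g0 k)) ->
   ~ residually_finite H -> ~ residually_finite A).
Proof.
  pose proof (W_gen N H iota t HH) as Wg.
  destruct HH as [Ht HU].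
  assert (mkphi : forall c, exists phi : hom H A, (forall g, phi (iota g) = j1 g) /\ phi t = j2 c).
  { intros c. destruct (HU A j1 (j2 c)) as [[phi [P1 P2]] _]; eauto.
    intros n Hn. rewrite (proj1 HA n Hn), <- hfunM, (HC n c Hn), hfunM, mulKl. reflexivity. }
  assert (Main : forall c (phi : hom H A), (forall g, phi (iota g) = j1 g) -> phi t = j2 c ->
     forall x, exists K, (0 <= K)%Z /\ ((forall k, (1 <= Z.abs k <= K)%Z -> ~ N (zpow c k)) ->
        phi x = gone -> x = gone)).
  { intros c phi Pi Pt x. destruct (Wg x) as [l0 ->].
    destruct (red N H iota t Ht (length l0) l0 (le_n _)) as (l & Wl & Sl & Ll & Rl).
    exists (Sz l). split; [apply Sz_nonneg|]. intros Hc E. rewrite <- Wl in *.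
    apply (key HN HC H iota t A j1 j2 HA c phi Pi Pt (Sz l) Hc l Rl (Z.le_refl _) E). }
  split.
  - intros [c Hc]. destruct (mkphi c) as [phi [Pi Pt]]. exists phi. intros x y E.
    destruct (Main c phi Pi Pt (x ⋅ ginv y)) as [K [_ HK]].
    assert (E' : x ⋅ ginv y = gone).
    { apply HK. intros k Hk. apply Hc. lia. rewrite hfunM, hom_inv, E, mulVr. reflexivity. }
    apply inv_uniq in E'. rewrite <- (inv_inv y), E', inv_inv. reflexivity.
  - intros Hyp nRF RFA. apply nRF. intros x Hx.
    destruct (mkphi gone) as [phi0 _].
    destruct (Wg x) as [l0 El0].
    destruct (red N H iota t Ht (length l0) l0 (le_n _)) as (l & Wl & Sl & Ll & Rl).
    destruct (Hyp (Z.to_nat (Sz l))) as [c Hc].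
    rewrite Z2Nat.id in Hc by apply Sz_nonneg.
    destruct (mkphi c) as [phi [Pi Pt]].
    assert (NZ : phi x <> gone).
    { intros E. apply Hx. rewrite El0, <- Wl in *.
      apply (key HN HC H iota t A j1 j2 HA c phi Pi Pt (Sz l) Hc l Rl (Z.le_refl _) E). }
    destruct (RFA (phi x) NZ) as (F & psi & Fin & Hpsi).
    exists F, (hcomp phi psi). split; auto.
Qed.
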